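(* Let $n>1$ and $k\ge1$. Let $\mathcal{B}=\{\mathcal{B}^{(0)},\mathcal{B}^{(1)},\mathcal{B}^{(2)}\}$ be a special $n$-Brinkhuis $k$-triple, and suppose some word of $\mathcal{B}^{(0)}$ begins with the letters $01$. Then: <ul> <li>$n\ge 7$;</li> <li>every word in $\mathcal{B}^{(0)}$ begins with $012$ and ends with $210$.</li> </ul>
   Context: Let $\Sigma=\{0,1,2\}$. A word over $\Sigma$ is square-free if it cannot be written as $xyyz$ with $y$ nonempty. $\mathcal{A}(n)$ is the set of square-free words of length $n$. For a word $w$, $\bar w$ denotes its reversal. $\tau$ is the letter permutation $0\mapsto1$, $1\mapsto2$, $2\mapsto0$, applied letterwise to words and elementwise to sets of words. An $n$-Brinkhuis $(k_0,k_1,k_2)$-triple consists of sets $\mathcal{B}^{(i)}\subset\mathcal{A}(n)$, $i\in\{0,1,2\}$, where $\mathcal{B}^{(i)}$ has $k_i\ge1$ distinct words. The defining condition: for every square-free word $ii'i''\in\mathcal{A}(3)$ and all $u\in\mathcal{B}^{(i)}$, $v\in\mathcal{B}^{(i')}$, $x\in\mathcal{B}^{(i'')}$, the concatenation $uvx$ is square-free. A special $n$-Brinkhuis $k$-triple is an $n$-Brinkhuis $(k,k,k)$-triple satisfying two further conditions: <ul> <li>$\mathcal{B}^{(1)}=\tau(\mathcal{B}^{(0)})$ and $\mathcal{B}^{(2)}=\tau^2(\mathcal{B}^{(0)})$;</li> <li>$w\in\mathcal{B}^{(0)}$ implies $\bar w\in\mathcal{B}^{(0)}$.</li> </ul> 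*)

(* Defs.v *)
From mathcomp Require Import all_boot.
Set Implicit Arguments. Unset Strict Implicit. Unset Printing Implicit Defensive.

Definition letter := 'I_3.
Definition L0 : letter := @Ordinal 3 0 isT.
Definition L1 : letter := @Ordinal 3 1 isT.
Definition L2 : letter := @Ordinal 3 2 isT.

Definition square_free (w : seq letter) : Prop :=
  ~ exists x y z : seq letter, y <> [::] /\ w = x ++ y ++ y ++ z.

Definition tau (a : letter) : letter := inord ((nat_of_ord a).+1 %% 3).

Definition tau_set n (B : {set n.-tuple letter}) : {set n.-tuple letter} :=
  [set map_tuple tau w | w in B].

Definition brinkhuis_triple n (B : 'I_3 -> {set n.-tuple letter}) (k : 'I_3 -> nat) : Prop :=
  (forall i, #|B i| = k i /\ 1 <= k i) /\
  (forall i (w : n.-tuple letter), w \in B i -> square_free w) /\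
  (forall i i' i'' : 'I_3, square_free [:: i; i'; i''] ->
     forall u v x : n.-tuple letter,
       u \in B i -> v \in B i' -> x \in B i'' ->
       square_free (tval u ++ tval v ++ tval x)).

Definition special_brinkhuis_triple n (B : 'I_3 -> {set n.-tuple letter}) (k : nat) : Prop :=
  brinkhuis_triple B (fun _ => k) /\
  B L1 = tau_set (B L0) /\ B L2 = tau_set (tau_set (B L0)) /\
  (forall w : n.-tuple letter, w \in B L0 -> [tuple of rev w] \in B L0).

(* Main.v *)
Require Import Defs.
From mathcomp Require Import all_boot zify.

Lemma tau0 : tau L0 = L1. Proof. by apply: ord_inj; rewrite /tau /= inordK. Qed.
Lemma tau1 : tau L1 = L2. Proof. by apply: ord_inj; rewrite /tau /= inordK. Qed.
Lemma tau2 : tau L2 = L0. Proof. by apply: ord_inj; rewrite /tau /= inordK. Qed.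

Lemma letter3 (a : letter) : a = L0 \/ a = L1 \/ a = L2.
Proof.
case: a => [[|[|[|m]]] Hm].
- by left; apply: ord_inj.
- by right; left; apply: ord_inj.
- by right; right; apply: ord_inj.
- by [].
Qed.

Lemma notsq (a y c w : seq letter) : y <> [::] -> w = a ++ y ++ y ++ c -> ~ square_free w.
Proof. by move=> Hy Hw H; apply: H; exists a, y, c. Qed.

Lemma sf3 (a b : letter) : a <> b -> square_free [:: a; b; a].
Proof.
move=> Hab [x [y [z [Hy E]]]].
case: x E => [|d [|d' x']] /=.
- case: y Hy => [//|e [|e' y']] _ /= E.
  + by case: E => *; apply: Hab; congruence.
  + by move/(f_equal size): E => /=; rewrite size_cat /=; lia.
- case: y Hy => [//|e [|e' y']] _ /= E.
  + by case: E => *; apply: Hab; congruence.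
  + by move/(f_equal size): E => /=; rewrite size_cat /=; lia.
- move=> E; move/(f_equal size): E => /=; rewrite !size_cat /=.
  by case: y Hy => //= e y' _; lia.
Qed.

Theorem lemma3 (n k : nat) (B : 'I_3 -> {set n.-tuple letter}) :
  1 < n -> 1 <= k ->
  special_brinkhuis_triple B k ->
  (exists w : n.-tuple letter, w \in B L0 /\ prefix [:: L0; L1] (tval w)) ->
  7 <= n /\
  (forall w : n.-tuple letter, w \in B L0 ->
     prefix [:: L0; L1; L2] (tval w) /\ suffix [:: L2; L1; L0] (tval w)).
Proof.
move=> Hn _ [[_ [Hsf Htr]] [HB1 [HB2 Hrev]]] [w [wB /prefixP [w' Ew]]].
have m1 : forall u, u \in B L0 -> map_tuple tau u \in B L1.
  by move=> u uB; rewrite HB1; apply/imsetP; exists u.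
have m2 : forall u, u \in B L0 -> map_tuple tau (map_tuple tau u) \in B L2.
  by move=> u uB; rewrite HB2; apply/imsetP; exists (map_tuple tau u) => //; apply/imsetP; exists u.
have H101 : forall u v, u \in B L0 -> v \in B L0 ->
    square_free (map tau u ++ tval v ++ map tau u).
  move=> u v uB vB; apply: (Htr L1 L0 L1) => //; [by apply: sf3|exact: m1|exact: m1].
have H202 : forall u v, u \in B L0 -> v \in B L0 ->
    square_free (map tau (map tau u) ++ tval v ++ map tau (map tau u)).
  move=> u v uB vB; apply: (Htr L2 L0 L2) => //; [by apply: sf3|exact: m2|exact: m2].
have H020 : forall u v, u \in B L0 -> v \in B L0 ->
    square_free (tval u ++ map tau (map tau v) ++ tval u).
  move=> u v uB vB; apply: (Htr L0 L2 L0) => //; [by apply: sf3|exact: m2].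
set R := [tuple of rev w].
have RB : R \in B L0 by apply: Hrev.
have ER1 : map tau R = map tau (rev w') ++ [:: L2; L1].
  by rewrite /= Ew (rev_cat [:: L0; L1] w') map_cat /= tau0 tau1.
have ER2 : map tau (map tau R) = map tau (map tau (rev w')) ++ [:: L0; L2].
  by rewrite ER1 map_cat /= tau1 tau2.
have sizeu : forall u : n.-tuple letter, size u = n by move=> u; rewrite size_tuple.
have C1 : forall u, u \in B L0 -> exists u', tval u = [:: L0, L1 & u'].
  move=> u uB.
  have := sizeu u; case E: (tval u) => [|f [|s u']] //=; try lia; move=> _.
  have := H101 R u RB uB; have := H202 R u RB uB; rewrite /= in ER1 ER2 *; rewrite ER2 ER1 E.
  case: (letter3 f) => [Hf|[Hf|Hf]] S2 S1; subst f.
  - case: (letter3 s) => [Hs|[Hs|Hs]]; subst s.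
    + by exfalso; apply: (notsq [::] [:: L0] u' _ _ _ (Hsf _ _ uB)) => //; rewrite E.
    + by exists u'.
    + exfalso; apply: (notsq (map tau (map tau (rev w'))) [:: L0; L2] (u' ++ _) _ _ _ S2) => //.
      by rewrite -!catA.
  - exfalso; apply: (notsq (map tau (rev w') ++ [:: L2]) [:: L1] ((s :: u') ++ _) _ _ _ S1) => //.
    by rewrite -!catA.
  - exfalso; apply: (notsq (map tau (map tau (rev w')) ++ [:: L0]) [:: L2] ((s :: u') ++ _) _ _ _ S2) => //.
    by rewrite -!catA.
have C2 : forall u, u \in B L0 -> exists u', tval u = u' ++ [:: L1; L0].
  move=> u uB; have [u' Eu] := C1 _ (Hrev u uB).
  have Eu' : rev (tval u) = [:: L0, L1 & u'] by exact: Eu.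
  exists (rev u'); rewrite -[tval u]revK Eu'.
  by rewrite (rev_cat [:: L0; L1] u').
have C3 : forall u, u \in B L0 -> exists u', tval u = [:: L0, L1, L2 & u'].
  move=> u uB; have [u' E] := C1 _ uB; have [u'' E'] := C2 _ uB.
  case: u' E => [|c u'] E.
    move: E'; rewrite E; case: u'' => [|a [|b u'']] /=.
    - by case.
    - by case.
    - by move/(congr1 size); rewrite /= ?size_cat /=; lia.
  have := H101 R u RB uB; rewrite /= in ER1 *; rewrite ER1 E => S1.
  case: (letter3 c) => [Hc|[Hc|Hc]]; subst c.
  - exfalso; apply: (notsq (map tau (rev w') ++ [:: L2]) [:: L1; L0] (u' ++ _) _ _ _ S1) => //.
    by rewrite -!catA.
  - by exfalso; apply: (notsq [:: L0] [:: L1] u' _ _ _ (Hsf _ _ uB)) => //; rewrite E.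
  - by exists u'.
have C4 : forall u, u \in B L0 -> exists u', tval u = u' ++ [:: L2; L1; L0].
  move=> u uB; have [u' Eu] := C3 _ (Hrev u uB).
  have Eu' : rev (tval u) = [:: L0, L1, L2 & u'] by exact: Eu.
  exists (rev u'); rewrite -[tval u]revK Eu'.
  by rewrite (rev_cat [:: L0; L1; L2] u').
split; last first.
  move=> u uB; have [a Ea] := C3 _ uB; have [b Eb] := C4 _ uB.
  by split; [apply/prefixP; exists a | apply/suffixP; exists b].
case: (leqP 7 n) => // Hlt; exfalso.
have [a Ea] := C3 _ wB; have [b Eb] := C4 _ wB.
have sw := sizeu w; have sw' := sizeu w.
rewrite Ea in sw; rewrite Eb in sw'.
have E2 : [:: L0, L1, L2 & a] = b ++ [:: L2; L1; L0] by rewrite -Ea -Eb.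
move: E2; case: a Ea sw => [|a1 [|a2 [|a3 [|a4 a]]]] Ea sw;
  case: b Eb sw' => [|b1 [|b2 [|b3 [|b4 b]]]] Eb sw' /=;
  try (rewrite /= ?size_cat /= in sw sw'; lia).
- by case.
- by case.
- case=> *; subst.
  apply: (notsq [:: L0; L1; L2] [:: L1; L0; L2; L0] [:: L1; L2; L1; L0] _ _ _ (H020 _ _ wB wB)) => //.
  by rewrite Ea /= !(tau0, tau1, tau2).
- case=> *; subst.
  by apply: (notsq [:: L0; L1] [:: L2] [:: L1; L0] _ _ _ (Hsf _ _ wB)) => //; rewrite Ea.
Qed.
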